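(* Let $\mathcal{C}$ be a category, let $\mathcal{D}$ be a full pro-reflective subcategory of $\mathcal{C}$, and let $J$ be a directed partially ordered set. For every pair $P,Q\in Ob\,\mathcal{D}$ the following are equivalent: (i) $P\cong Q$ in $\mathcal{D}$; (ii) $P\cong Q$ in the shape category $Sh_{(\mathcal{C},\mathcal{D})}$; (iii) $P\cong Q$ in the $J$-shape category $Sh^J_{(\mathcal{C},\mathcal{D})}$.
   Context: An inverse system $\boldsymbol{X}=(X_\lambda,p_{\lambda\lambda'},\Lambda)$ in a category: $\Lambda$ directed preordered, morphisms $p_{\lambda\lambda'}:X_{\lambda'}\to X_\lambda$ ($\lambda\le\lambda'$), $p_{\lambda\lambda}=1$, $p_{\lambda\lambda'}p_{\lambda'\lambda''}=p_{\lambda\lambda''}$. A $J$-morphism $(f,f^j_\mu):\boldsymbol{X}\to\boldsymbol{Y}=(Y_\mu,q_{\mu\mu'},M)$: $f:M\to\Lambda$ and morphisms $f^j_\mu:X_{f(\mu)}\to Y_\mu$ ($j\in J$) such that for all $\mu\le\mu'$ there exist $\lambda\ge f(\mu),f(\mu')$, $j_0$ with $f^{j'}_\mu p_{f(\mu)\lambda}=q_{\mu\mu'}f^{j'}_{\mu'}p_{f(\mu')\lambda}$ for $j'\ge j_0$; composition $(fg,g^j_\nu f^j_{g(\nu)})$; $(f,f^j_\mu)\sim(f',f'^j_\mu)$ iff for each $\mu$ there are $\lambda\ge f(\mu),f'(\mu)$, $j_0$ with $f^{j'}_\mu p_{f(\mu)\lambda}=f'^{j'}_\mu p_{f'(\mu)\lambda}$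 for $j'\ge j_0$; $pro^J$-$\mathcal{D}$ is the quotient category; $J=\{1\}$ gives $pro$-$\mathcal{D}$, and $\underline{I}:pro$-$\mathcal{D}\to pro^J$-$\mathcal{D}$ sends $[(f,f_\mu)]$ to $[(f,f^j_\mu=f_\mu)]$. A $\mathcal{D}$-expansion of $X\in Ob\,\mathcal{C}$ is a family $\boldsymbol{p}=(p_\lambda:X\to X_\lambda)$ into an inverse system in $\mathcal{D}$ with $p_{\lambda\lambda'}p_{\lambda'}=p_\lambda$ such that (E1) each $h:X\to P$, $P\in Ob\,\mathcal{D}$, factors as $gp_\lambda$, and (E2) $gp_\lambda=g'p_\lambda$ implies $gp_{\lambda\lambda'}=g'p_{\lambda\lambda'}$ for some $\lambda'\ge\lambda$; $\mathcal{D}$ is pro-reflective if every object of $\mathcal{C}$ has one. $Sh^J_{(\mathcal{C},\mathcal{D})}$: objects of $\mathcal{C}$; with chosen $\mathcal{D}$-expansions $\boldsymbol{p}:X\to\boldsymbol{X}$, $\boldsymbol{q}:Y\to\boldsymbol{Y}$, morphisms $X\to Y$ are the morphisms $\boldsymbol{X}\to\boldsymbol{Y}$ of $pro^J$-$\mathcal{D}$, identified across choices of expansions via $\underline{I}$ of the canonical $pro$-$\mathcal{D}$ isomorphisms between expansions; composition of representatives. $Sh_{(\mathcal{C},\mathcal{D})}$ is the case $J=\{1\}$ (abstract shape category). (For $P\in Ob\,\mathcal{D}$ the rudimentary system $(P)$ with identity is a $\mathcal{D}$-expansion.) *)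

(* Defs.v *)
Set Implicit Arguments.
Unset Strict Implicit.

Record Category := {
  ob : Type;
  hom : ob -> ob -> Type;
  idm : forall a, hom a a;
  comp : forall a b c, hom b c -> hom a b -> hom a c;
  comp_id_l : forall a b (f : hom a b), comp (idm b) f = f;
  comp_id_r : forall a b (f : hom a b), comp f (idm a) = f;
  comp_assoc : forall a b c d (h : hom c d) (g : hom b c) (f : hom a b),
      comp h (comp g f) = comp (comp h g) f
}.

Arguments idm {c0} a.
Arguments comp {c0 a b c} _ _.

Definition iso_in (C : Category) (a b : ob C) : Prop :=
  exists (f : hom a b) (g : hom b a), comp g f = idm a /\ comp f g = idm b.

(* A full subcategory D of C is given by the predicate of its objects
   (inD); its morphisms are all C-morphisms between them. *)
Definition iso_in_full_sub (C : Category) (inD : ob C -> Prop)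
  (P Q : ob C) : Prop :=
  exists (f : hom P Q) (g : hom Q P), comp g f = idm P /\ comp f g = idm Q.

Record DirPoset := {
  dp : Type;
  dle : dp -> dp -> Prop;
  dle_refl : forall a, dle a a;
  dle_trans : forall a b c, dle a b -> dle b c -> dle a c;
  dle_antisym : forall a b, dle a b -> dle b a -> a = b;
  dle_directed : forall a b, exists c, dle a c /\ dle b c;
  dp_inhabited : inhabited dp
}.

Definition unitPoset : DirPoset.
Proof.
  refine (@Build_DirPoset unit (fun _ _ => True) _ _ _ _ _).
  - intros; exact I.
  - intros; exact I.
  - intros [] [] _ _; reflexivity.
  - intros a b; exists tt; split; exact I.
  - exact (inhabits tt).
Defined.

Record InvSys (C : Category) (inD : ob C -> Prop) := {
  idx : Type;
  ile : idx -> idx -> Prop;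
  ile_refl : forall l, ile l l;
  ile_trans : forall l1 l2 l3, ile l1 l2 -> ile l2 l3 -> ile l1 l3;
  ile_directed : forall l1 l2, exists l3, ile l1 l3 /\ ile l2 l3;
  idx_inhabited : inhabited idx;
  sobj : idx -> ob C;
  sobj_inD : forall l, inD (sobj l);
  bond : forall l l', ile l l' -> hom (sobj l') (sobj l);
  bond_id : forall l (h : ile l l), bond h = idm (sobj l);
  bond_comp : forall l l' l'' (h1 : ile l l') (h2 : ile l' l'') (h3 : ile l l''),
      comp (bond h1) (bond h2) = bond h3
}.

Arguments idx {C inD} _.
Arguments ile {C inD} _ _ _.
Arguments sobj {C inD} _ _.
Arguments bond {C inD} _ {l l'} _.

Section ProJ.
Variables (C : Category) (inD : ob C -> Prop) (J : DirPoset).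

(* Raw data (f, f^j_mu) of a J-morphism X -> Y. *)
Record JData (X Y : InvSys inD) := {
  jmap : idx Y -> idx X;
  jcomp : forall (j : dp J) (mu : idx Y), hom (sobj X (jmap mu)) (sobj Y mu)
}.

Definition is_JMor (X Y : InvSys inD) (f : JData X Y) : Prop :=
  forall (mu mu' : idx Y) (h : ile Y mu mu'),
    exists (lam : idx X) (h1 : ile X (jmap f mu) lam) (h2 : ile X (jmap f mu') lam)
           (j0 : dp J),
      forall j', dle j0 j' ->
        comp (jcomp f j' mu) (bond X h1)
        = comp (bond Y h) (comp (jcomp f j' mu') (bond X h2)).

Definition jcompose (X Y Z : InvSys inD) (f : JData X Y) (g : JData Y Z)
  : JData X Z :=
  {| jmap := fun nu => jmap f (jmap g nu);
     jcomp := fun j nu => comp (jcomp g j nu) (jcomp f j (jmap g nu)) |}.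

Definition jidentity (X : InvSys inD) : JData X X :=
  {| jmap := fun l => l; jcomp := fun j l => idm (sobj X l) |}.

Definition jequiv (X Y : InvSys inD) (f f' : JData X Y) : Prop :=
  forall mu : idx Y,
    exists (lam : idx X) (h1 : ile X (jmap f mu) lam) (h2 : ile X (jmap f' mu) lam)
           (j0 : dp J),
      forall j', dle j0 j' ->
        comp (jcomp f j' mu) (bond X h1) = comp (jcomp f' j' mu) (bond X h2).

(* X and Y are isomorphic in pro^J-D (the quotient category). *)
Definition iso_proJ (X Y : InvSys inD) : Prop :=
  exists (f : JData X Y) (g : JData Y X),
    is_JMor f /\ is_JMor g /\
    jequiv (jcompose f g) (jidentity X) /\
    jequiv (jcompose g f) (jidentity Y).
End ProJ.

Record Expansion (C : Category) (inD : ob C -> Prop) (X : ob C) := {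
  esys : InvSys inD;
  eproj : forall l : idx esys, hom X (sobj esys l);
  eproj_compat : forall l l' (h : ile esys l l'),
      comp (bond esys h) (eproj l') = eproj l;
  eE1 : forall (P : ob C), inD P -> forall h : hom X P,
      exists (l : idx esys) (g : hom (sobj esys l) P), h = comp g (eproj l);
  eE2 : forall (P : ob C), inD P -> forall (l : idx esys) (g g' : hom (sobj esys l) P),
      comp g (eproj l) = comp g' (eproj l) ->
      exists (l' : idx esys) (hl : ile esys l l'),
        comp g (bond esys hl) = comp g' (bond esys hl)
}.

Arguments esys {C inD X} _.

Definition pro_reflective (C : Category) (inD : ob C -> Prop) : Prop :=
  forall X : ob C, inhabited (Expansion inD X).

(* ---------- (J-)shape categories ----------
   Given a choice E of D-expansions (which exists by pro-reflectivity),
   the morphisms X -> Y of Sh^J are the morphisms E X -> E Y of pro^J-D,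
   with composition of representatives.  Hence P, Q are isomorphic in
   Sh^J iff the chosen expansions are isomorphic in pro^J-D. *)
Definition iso_ShJ (C : Category) (inD : ob C -> Prop) (J : DirPoset)
  (E : forall X : ob C, Expansion inD X) (P Q : ob C) : Prop :=
  iso_proJ J (esys (E P)) (esys (E Q)).

(* The abstract shape category Sh is the case J = {1}. *)
Definition iso_Sh (C : Category) (inD : ob C -> Prop)
  (E : forall X : ob C, Expansion inD X) (P Q : ob C) : Prop :=
  iso_ShJ unitPoset E P Q.

(* Main.v *)
Require Import Defs.
From Stdlib Require Import ClassicalEpsilon.

Section S.
Variables (C : Category) (inD : ob C -> Prop).

Lemma E2' (X : ob C) (e : Expansion inD X) (Z : ob C) (hZ : inD Z)
  (a b : idx (esys e)) (g : hom (sobj (esys e) a) Z) (g' : hom (sobj (esys e) b) Z) :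
  comp g (eproj a) = comp g' (eproj b) ->
  exists c (ha : ile (esys e) a c) (hb : ile (esys e) b c),
    comp g (bond _ ha) = comp g' (bond _ hb).
Proof.
  intro H.
  destruct (ile_directed a b) as [d [had hbd]].
  assert (H2 : comp (comp g (bond _ had)) (eproj d) = comp (comp g' (bond _ hbd)) (eproj d)).
  { rewrite <- !comp_assoc, !eproj_compat. exact H. }
  destruct (eE2 hZ H2) as [l' [hl Hl]].
  exists l', (ile_trans had hl), (ile_trans hbd hl).
  rewrite <- (bond_comp had hl), <- (bond_comp hbd hl), !comp_assoc. exact Hl.
Qed.

Section L1.
Variables (J : DirPoset) (P Q : ob C) (eP : Expansion inD P) (eQ : Expansion inD Q).

Definition pickT (u : hom P Q) (mu : idx (esys eQ)) :
  {l : idx (esys eP) & {g : hom (sobj _ l) (sobj _ mu) |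
      comp (eproj mu) u = comp g (eproj l)}}.
Proof.
  destruct (constructive_indefinite_description _
     (eE1 eP (sobj_inD mu) (comp (eproj mu) u))) as [l Hl].
  destruct (constructive_indefinite_description _ Hl) as [g Hg].
  exact (existT _ l (exist _ g Hg)).
Defined.

Definition mkJ (u : hom P Q) : JData J (esys eP) (esys eQ) :=
  {| jmap := fun mu => projT1 (pickT u mu);
     jcomp := fun j mu => proj1_sig (projT2 (pickT u mu)) |}.

Lemma mkJ_spec u j mu : comp (eproj mu) u = comp (jcomp (mkJ u) j mu) (eproj (jmap (mkJ u) mu)).
Proof. exact (proj2_sig (projT2 (pickT u mu))). Qed.

Lemma mkJ_mor u : is_JMor (mkJ u).
Proof.
  intros mu mu' h.
  destruct (dp_inhabited J) as [j0].
  assert (H : comp (jcomp (mkJ u) j0 mu) (eproj (jmap (mkJ u) mu))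
            = comp (comp (bond _ h) (jcomp (mkJ u) j0 mu')) (eproj (jmap (mkJ u) mu'))).
  { rewrite <- mkJ_spec, <- comp_assoc, <- mkJ_spec, comp_assoc, eproj_compat. reflexivity. }
  destruct (E2' _ _ _ (sobj_inD mu) _ _ _ _ H) as [c [ha [hb Hc]]].
  exists c, ha, hb, j0. intros j' _. rewrite comp_assoc. exact Hc.
Qed.
End L1.

Lemma L1 (J : DirPoset) (P Q : ob C) (eP : Expansion inD P) (eQ : Expansion inD Q) :
  iso_in_full_sub inD P Q -> iso_proJ J (esys eP) (esys eQ).
Proof.
  intros [u [v [Hvu Huv]]].
  exists (mkJ J P Q eP eQ u), (mkJ J Q P eQ eP v).
  split; [apply mkJ_mor|]. split; [apply mkJ_mor|].
  destruct (dp_inhabited J) as [j0].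
  split.
  - intro l. simpl.
    assert (H : comp (comp (jcomp (mkJ J Q P eQ eP v) j0 l) (jcomp (mkJ J P Q eP eQ u) j0 (jmap (mkJ J Q P eQ eP v) l)))
                   (eproj (jmap (mkJ J P Q eP eQ u) (jmap (mkJ J Q P eQ eP v) l))) = comp (idm _) (eproj l)).
    { rewrite <- comp_assoc. rewrite <- (mkJ_spec J P Q eP eQ u j0 _), comp_assoc, <- (mkJ_spec J Q P eQ eP v j0 l), <- comp_assoc, Hvu,
        comp_id_r, comp_id_l. reflexivity. }
    destruct (E2' _ _ _ (sobj_inD l) _ _ _ _ H) as [c [ha [hb Hc]]].
    exists c, ha, hb, j0. intros j' _. exact Hc.
  - intro l. simpl.
    assert (H : comp (comp (jcomp (mkJ J P Q eP eQ u) j0 l) (jcomp (mkJ J Q P eQ eP v) j0 (jmap (mkJ J P Q eP eQ u) l)))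
                   (eproj (jmap (mkJ J Q P eQ eP v) (jmap (mkJ J P Q eP eQ u) l))) = comp (idm _) (eproj l)).
    { rewrite <- comp_assoc. rewrite <- (mkJ_spec J Q P eQ eP v j0 _), comp_assoc, <- (mkJ_spec J P Q eP eQ u j0 l), <- comp_assoc, Huv,
        comp_id_r, comp_id_l. reflexivity. }
    destruct (E2' _ _ _ (sobj_inD l) _ _ _ _ H) as [c [ha [hb Hc]]].
    exists c, ha, hb, j0. intros j' _. exact Hc.
Qed.

Lemma half (J : DirPoset) (P Q : ob C) (eP : Expansion inD P) (eQ : Expansion inD Q)
  (l0 : idx (esys eP)) (r : hom (sobj _ l0) P) (Hr : comp r (eproj l0) = idm P)
  (m0 : idx (esys eQ)) (s : hom (sobj _ m0) Q) (Hs : comp s (eproj m0) = idm Q)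
  (f : JData J (esys eP) (esys eQ)) (g : JData J (esys eQ) (esys eP))
  (Hf : is_JMor f) (Hg : jequiv (jcompose f g) (jidentity J (esys eP))) :
  exists j0, forall j, dle j0 j ->
    comp (comp r (comp (jcomp g j l0) (eproj (jmap g l0))))
         (comp s (comp (jcomp f j m0) (eproj (jmap f m0)))) = idm P.
Proof.
  set (nu := jmap g l0).
  assert (E1 : comp (comp (eproj nu) s) (eproj m0) = comp (idm _) (eproj nu)).
  { rewrite <- comp_assoc, Hs, comp_id_r, comp_id_l. reflexivity. }
  destruct (E2' _ _ _ (sobj_inD nu) _ _ _ _ E1) as [c [ha [hb H1]]].
  rewrite comp_id_l in H1.
  assert (D1 : forall X (x : hom X _), comp (eproj nu) (comp s (comp (bond _ ha) x)) = comp (bond _ hb) x).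
  { intros X x. rewrite !comp_assoc, H1. reflexivity. }
  destruct (Hf m0 c ha) as [lam1 [h11 [h12 [j1 H2]]]].
  assert (D2 : forall j, dle j1 j -> comp (jcomp f j m0) (eproj (jmap f m0))
                 = comp (bond _ ha) (comp (jcomp f j c) (eproj (jmap f c)))).
  { intros j hj. rewrite <- (eproj_compat h11), <- (eproj_compat h12), !comp_assoc, (H2 j hj),
      !comp_assoc. reflexivity. }
  destruct (Hf nu c hb) as [lam2 [h21 [h22 [j2 H3]]]].
  assert (D3 : forall j, dle j2 j -> comp (jcomp f j nu) (eproj (jmap f nu))
                 = comp (bond _ hb) (comp (jcomp f j c) (eproj (jmap f c)))).
  { intros j hj. rewrite <- (eproj_compat h21), <- (eproj_compat h22), !comp_assoc, (H3 j hj),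
      !comp_assoc. reflexivity. }
  destruct (Hg l0) as [lam3 [h31 [h32 [j3 H4]]]]. simpl in H4.
  assert (D4 : forall j, dle j3 j -> comp (jcomp g j l0) (comp (jcomp f j nu) (eproj (jmap f nu)))
                 = eproj l0).
  { intros j hj. pose proof (f_equal (fun x => comp x (eproj lam3)) (H4 j hj)) as H.
    simpl in H. rewrite <- !comp_assoc, !eproj_compat, comp_id_l in H. exact H. }
  destruct (dle_directed j1 j2) as [ja [Ha1 Ha2]].
  destruct (dle_directed ja j3) as [j0 [H01 H03]].
  exists j0. intros j hj.
  rewrite (D2 j (dle_trans Ha1 (dle_trans H01 hj))).
  rewrite <- !comp_assoc. fold nu. rewrite D1.
  rewrite <- (D3 j (dle_trans Ha2 (dle_trans H01 hj))).
  exact (eq_trans (f_equal (comp r) (D4 j (dle_trans H03 hj))) Hr).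
Qed.

Lemma L2 (J : DirPoset) (P Q : ob C) (hP : inD P) (hQ : inD Q)
  (eP : Expansion inD P) (eQ : Expansion inD Q) :
  iso_proJ J (esys eP) (esys eQ) -> iso_in_full_sub inD P Q.
Proof.
  intros [f [g [Hf [Hg [Hfg Hgf]]]]].
  destruct (eE1 eP hP (idm P)) as [l0 [r Hr]].
  destruct (eE1 eQ hQ (idm Q)) as [m0 [s Hs]].
  destruct (half J P Q eP eQ l0 r (eq_sym Hr) m0 s (eq_sym Hs) f g Hf Hfg) as [ja Ha].
  destruct (half J Q P eQ eP m0 s (eq_sym Hs) l0 r (eq_sym Hr) g f Hg Hgf) as [jb Hb].
  destruct (dle_directed ja jb) as [j [hja hjb]].
  exists (comp s (comp (jcomp f j m0) (eproj (jmap f m0)))),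
         (comp r (comp (jcomp g j l0) (eproj (jmap g l0)))).
  split; [apply Ha | apply Hb]; assumption.
Qed.
End S.

Theorem theorem5 (C : Category) (inD : ob C -> Prop)
  (E : forall X : ob C, Expansion inD X) (J : DirPoset)
  (P Q : ob C) (hP : inD P) (hQ : inD Q) :
  (iso_in_full_sub inD P Q <-> iso_Sh E P Q) /\
  (iso_Sh E P Q <-> iso_ShJ J E P Q).
Proof.
  unfold iso_Sh, iso_ShJ.
  split; split; intro H.
  - apply L1; exact H.
  - exact (L2 _ _ _ _ _ hP hQ _ _ H).
  - apply L1; exact (L2 _ _ _ _ _ hP hQ _ _ H).
  - apply L1; exact (L2 _ _ _ _ _ hP hQ _ _ H).
Qed.
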